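(* Suppose Assumption 4.1 holds, and that $\sum_{n=1}^\infty p_n<\infty$ and $\lim_{n\to\infty}\mu_n=0$. Then the sequence $\{x_n\}$ generated by Algorithm 3.1 converges linearly to some point of $\Omega$; that is, there exist $p\in\Omega$, $q\in(0,1)$ and $K\ge0$ such that $\|x_n-p\|^2\le K q^{n}$ for all $n$.
   Context: Let $H$ be a real Hilbert space, $A:H\to H$ a single-valued mapping and $B:H\to 2^H$ a set-valued mapping, and let $\Omega:=(A+B)^{-1}(0)=\{x\in H:\ 0\in Ax+Bx\}$. Algorithm 3.1 is the following iteration. Fix $x_0,x_1\in H$, $\mu\in(0,1)$, $\lambda_1>0$, real sequences $\{\alpha_n\},\{\beta_n\},\{\theta_n\}$ and nonnegative real sequences $\{\mu_n\},\{p_n\}$. For $n=1,2,\dots$ compute $w_n=x_n+\alpha_n(x_n-x_{n-1})$, $z_n=x_n+\beta_n(x_n-x_{n-1})$, $y_n=(I+\lambda_nB)^{-1}(I-\lambda_nA)w_n$, and set $\lambda_{n+1}=\min\{(\mu_n+\mu)\|w_n-y_n\|/\|Aw_n-Ay_n\|,\ \lambda_n+p_n\}$ if $Aw_n\neq Ay_n$, and $\lambda_{n+1}=\lambda_n+p_n$ otherwise. If $w_n=y_n$ the algorithm stops (then $y_n\in\Omega$). Otherwise set $x_{n+1}=(1-\theta_n)z_n+\theta_n\big(y_n-\lambda_n(Ay_n-Aw_n)\big)$ and continue. Here $I$ is the identity and $(I+\lambda B)^{-1}$ is the resolvent of $B$. Throughout, it is assumed that the algorithm does not stop, so that infinite sequences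 $\{x_n\},\{w_n\},\{z_n\},\{y_n\},\{\lambda_n\}$ are generated. Assumption 4.1: (i) $\Omega\neq\emptyset$. (ii) Either $A$ is $L$-Lipschitz continuous and $r$-strongly monotone and $B$ is maximal monotone, or $A$ is $L$-Lipschitz continuous and monotone and $B$ is maximal monotone and $r$-strongly monotone (for some $r>0$). (iii) With $\hat\lambda:=\min\{\mu/L,\lambda_1\}$ and $\tau:=1-\frac12\min\{1-\mu,\ 2\hat\lambda r\}\in(\tfrac12,1)$, the parameters satisfy: ($c_1$) $0\le\beta_n\le\beta<\frac12\big(\frac1\tau-1\big)$; ($c_2$) $0\le\alpha_n\le\alpha<\frac{1-\tau}{\tau}$; ($c_3$) $\max\Big\{\frac{1-\beta}{1+\alpha-\beta},\ \frac{\beta}{1+\beta-\tau(1+\alpha)}\Big\}<\theta\le\theta_{n-1}\le\theta_n\le\frac{-1-\beta+\sqrt{(1+\beta)^2-4(\frac1\tau-1-2\beta)(\beta-1)}}{2(\frac1\tau-1-2\beta)}$ for all $n$, where $\alpha,\beta,\theta$ are constants. A set-valued $B$ is $r$-strongly monotone if $\langle u-v,x-y\rangle\ge r\|x-y\|^2$ whenever $u\in Bx$, $v\in By$; a single-valued $A$ is $r$-strongly monotone if $\langle Ax-Ay,x-y\rangle\ge r\|x-y\|^2$ for all $x,y$. *)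

(* Defs.v *)
From HB Require Import structures.
From mathcomp Require Import all_boot all_order all_algebra.
From mathcomp Require Import all_classical all_reals all_analysis.
Set Implicit Arguments. Unset Strict Implicit. Unset Printing Implicit Defensive.
Import Order.TTheory GRing.Theory Num.Theory.
Import numFieldNormedType.Exports.
Local Open Scope classical_set_scope.
Local Open Scope ring_scope.

(* A real Hilbert space is modelled as a complete normed space H over R
   together with an inner product inducing its norm. *)
Definition is_inner_product {R : realType} {H : completeNormedModType R}
  (ip : H -> H -> R) : Prop :=
  [/\ (forall x y, ip x y = ip y x),
      (forall a x y z, ip (a *: x + y) z = a * ip x z + ip y z) &
      (forall x, ip x x = `|x| ^+ 2)].

Section Ops.
Context {R : realType} {H : completeNormedModType R} (ip : H -> H -> R).

Definition lipschitz_op (A : H -> H) (L : R) : Prop :=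
  forall x y, `|A x - A y| <= L * `|x - y|.

Definition monotone_op (A : H -> H) : Prop :=
  forall x y, 0 <= ip (A x - A y) (x - y).

Definition strongly_monotone_op (A : H -> H) (r : R) : Prop :=
  forall x y, r * `|x - y| ^+ 2 <= ip (A x - A y) (x - y).

(* set-valued operators B : H -> 2^H, with u \in B x written B x u *)
Definition monotone_mop (B : H -> set H) : Prop :=
  forall x y u v, B x u -> B y v -> 0 <= ip (u - v) (x - y).

Definition strongly_monotone_mop (B : H -> set H) (r : R) : Prop :=
  forall x y u v, B x u -> B y v -> r * `|x - y| ^+ 2 <= ip (u - v) (x - y).

Definition maximal_monotone_mop (B : H -> set H) : Prop :=
  monotone_mop B /\
  forall B' : H -> set H, monotone_mop B' ->
    (forall x u, B x u -> B' x u) -> forall x u, B' x u -> B x u.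

(* y \in (I + lam B)^{-1} x, i.e. x \in y + lam B y *)
Definition in_resolvent (B : H -> set H) (lam : R) (x y : H) : Prop :=
  exists b, B y b /\ x = y + lam *: b.

Definition zeros_sum (A : H -> H) (B : H -> set H) : set H :=
  [set x | exists b, B x b /\ A x + b = 0].
End Ops.

(* Main.v *)
Require Import Defs.
From HB Require Import structures.
From mathcomp Require Import all_boot all_order all_algebra.
From mathcomp Require Import all_classical all_reals all_analysis.
From mathcomp Require Import ring lra.
Import Order.TTheory GRing.Theory Num.Theory.
Import numFieldNormedType.Exports.
Local Open Scope classical_set_scope.
Local Open Scope ring_scope.



Section IP.
Context {R : realType} {H : completeNormedModType R} (ip : H -> H -> R).
Context (hip : is_inner_product ip).

Lemma ipC x y : ip x y = ip y x. Proof. by case: hip. Qed.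
Lemma ipDl x y z : ip (x + y) z = ip x z + ip y z.
Proof. by case: hip => _ h _; have := h 1 x y z; rewrite scale1r mul1r. Qed.
Lemma ipZl a x z : ip (a *: x) z = a * ip x z.
Proof. case: hip => _ h _; have := h a x 0 z; rewrite addr0 => ->.
have := h 1 0 0 z; rewrite scale1r addr0 mul1r => h0.
have : ip 0 z = 0 by lra. by move=> ->; rewrite addr0. Qed.
Lemma ipNl x z : ip (- x) z = - ip x z.
Proof. by rewrite -scaleN1r ipZl mulN1r. Qed.
Lemma ipBl x y z : ip (x - y) z = ip x z - ip y z.
Proof. by rewrite ipDl ipNl. Qed.
Lemma ipDr x y z : ip z (x + y) = ip z x + ip z y.
Proof. by rewrite ipC ipDl !(ipC z). Qed.
Lemma ipZr a x z : ip z (a *: x) = a * ip z x.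
Proof. by rewrite ipC ipZl ipC. Qed.
Lemma ipNr x z : ip z (- x) = - ip z x.
Proof. by rewrite ipC ipNl ipC. Qed.
Lemma ipBr x y z : ip z (x - y) = ip z x - ip z y.
Proof. by rewrite ipDr ipNr. Qed.
Lemma ipsq x : ip x x = `|x| ^+ 2.
Proof. by case: hip. Qed.
Lemma ip_ge0 x : 0 <= ip x x.
Proof. by rewrite ipsq sqr_ge0. Qed.
Lemma ip2le x y : 2 * ip x y <= ip x x + ip y y.
Proof. have := ip_ge0 (x - y); rewrite !ipBl !ipBr (ipC y x); lra. Qed.


Lemma tseng_core (D E G : H) (lam r kap : R) :
  lam * r * ip E E <= ip (D - lam *: G) E ->
  lam ^+ 2 * ip G G <= kap ^+ 2 * ip D D ->
  ip (E + lam *: G) (E + lam *: G) <=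
  ip (D + E) (D + E) - (1 - kap ^+ 2) * ip D D - 2 * lam * r * ip E E.
Proof.
rewrite !ipBl !ipDl !ipZl !ipDr !ipZr ?(ipC E D) ?(ipC G E) ?(ipC G D) ?(ipC E G) ?(ipC D G).
nra.
Qed.

Lemma tseng_ineq (A : H -> H) (r lam kap : R) (w y p : H) :
  lam * r * ip (y - p) (y - p) <= ip (w - y - lam *: (A w - A y)) (y - p) ->
  lam ^+ 2 * ip (A w - A y) (A w - A y) <= kap ^+ 2 * ip (w - y) (w - y) ->
  ip (y - lam *: (A y - A w) - p) (y - lam *: (A y - A w) - p) <=
  ip (w - p) (w - p) - (1 - kap ^+ 2) * ip (w - y) (w - y)
    - 2 * lam * r * ip (y - p) (y - p).
Proof.
have e1 : y - lam *: (A y - A w) - p = (y - p) + lam *: (A w - A y).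
  by rewrite -[A y - A w]opprB scalerN opprK addrAC.
have e2 : w - p = (w - y) + (y - p) by rewrite addrA subrK.
rewrite e1 e2; exact: tseng_core.
Qed.

Lemma inertial_core (X Y U Z : H) (al be th tau : R) :
  0 < th -> th < 1 -> 0 <= be -> 0 <= al -> 0 <= tau ->
  ip U U <= tau * ip ((1 + al) *: X - al *: Y) ((1 + al) *: X - al *: Y) ->
  Z = (1 - th) *: ((1 + be) *: X - be *: Y) + th *: U ->
  ip Z Z + (1 - th) * (1 - be) / th * ip (Z - X) (Z - X) <=
  ((1 - th) * (1 + be) + th * tau * (1 + al)) * ip X X +
  ((1 - th) * be * (1 + be) + th * tau * al * (1 + al)
     + (1 - th) * be * (1 - be) / th) * ip (X - Y) (X - Y).
Proof.
move=> th0 th1 be0 al0 tau0 hU hZ.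
set W := (1 + al) *: X - al *: Y.
set V := Z - X - (X - Y).
have hid : ((1 - th) * (1 + be) + th * tau * (1 + al)) * ip X X +
  ((1 - th) * be * (1 + be) + th * tau * al * (1 + al)
     + (1 - th) * be * (1 - be) / th) * ip (X - Y) (X - Y)
  - (ip Z Z + (1 - th) * (1 - be) / th * ip (Z - X) (Z - X)) =
  th * (tau * ip W W - ip U U) + ((1 - th) * be + th * tau * al) * ip Y Y
  + (1 - th) * be / th * ip V V.
  rewrite /V /W hZ !(ipBl, ipDl, ipZl, ipNl, ipBr, ipDr, ipZr, ipNr) ?(ipC Y X) ?(ipC U X) ?(ipC U Y).
  by field; rewrite gt_eqF.
rewrite -subr_ge0 hid.
have h1 : 0 <= th * (tau * ip W W - ip U U) by rewrite mulr_ge0 ?subr_ge0 // ltW.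
have h2 : 0 <= ((1 - th) * be + th * tau * al) * ip Y Y.
  apply: mulr_ge0; last exact: ip_ge0.
  apply: addr_ge0; apply: mulr_ge0 => //; [lra | apply: mulr_ge0; lra].
have h3 : 0 <= (1 - th) * be / th * ip V V.
  apply: mulr_ge0; last exact: ip_ge0.
  apply: divr_ge0; [apply: mulr_ge0 | ]; lra.
lra.
Qed.

Lemma ip_sum_le (a b : H) : ip (a + b) (a + b) <= 2 * ip a a + 2 * ip b b.
Proof.
have := ip2le a b; rewrite !(ipDl, ipDr) (ipC b a); lra.
Qed.

Lemma mono_comb (w y p b bp Aw Ay Ap : H) (lam r : R) :
  0 <= lam -> w - lam *: Aw = y + lam *: b -> Ap + bp = 0 ->
  r * ip (y - p) (y - p) <= ip (b - bp) (y - p) + ip (Ay - Ap) (y - p) ->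
  lam * r * ip (y - p) (y - p) <= ip (w - y - lam *: (Aw - Ay)) (y - p).
Proof.
move=> lam0 hw hp; move: (y - p) => E hm.
have e1 := f_equal (fun v => ip v E) hw.
have e2 := f_equal (fun v => ip v E) hp.
move: e1 e2 hm => /=; rewrite !(ipBl, ipDl, ipZl, ipNl).
have -> : ip 0 E = 0 by have := ipDl 0 0 E; rewrite addr0; lra.
move=> e1 e2 hm.
have : lam * (r * ip E E) <= lam * (ip b E - ip bp E + (ip Ay E - ip Ap E)).
  by apply: ler_wpM2l.
have e3 : lam * (ip Ap E + ip bp E) = 0 by rewrite e2 mulr0.
nra.
Qed.

Lemma ip_eq (a b : H) : ip (a - b) (a - b) = 0 -> a = b.
Proof.
rewrite ipsq => /eqP; rewrite sqrf_eq0 normr_eq0 subr_eq0 => /eqP //.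
Qed.

Lemma vec_idZ (a b c p : H) (be th : R) :
  (1 - th) *: (a + be *: (a - b)) + th *: c - p =
  (1 - th) *: ((1 + be) *: (a - p) - be *: (b - p)) + th *: (c - p).
Proof.
apply: ip_eq.
rewrite !(ipBl, ipDl, ipZl, ipNl, ipBr, ipDr, ipZr, ipNr).
rewrite ?(ipC b a) ?(ipC c a) ?(ipC p a) ?(ipC c b) ?(ipC p b) ?(ipC p c).
ring.
Qed.

Lemma vec_idW (a b p : H) (al : R) :
  a + al *: (a - b) - p = (1 + al) *: (a - p) - al *: (b - p).
Proof.
apply: ip_eq.
rewrite !(ipBl, ipDl, ipZl, ipNl, ipBr, ipDr, ipZr, ipNr).
rewrite ?(ipC b a) ?(ipC p a) ?(ipC p b).
ring.
Qed.

Lemma sub_sub (a b p : H) : (a - p) - (b - p) = a - b.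
Proof. by rewrite opprB addrA subrK. Qed.

End IP.



Lemma lam_eventually (R : realType) (lam mun pn : nat -> R) (mu lh : R) :
  0 < lh -> (forall n, (1<=n)%N -> lh <= lam n) ->
  (forall n, (1<=n)%N -> lam n.+1 <= lam n + pn n) ->
  (forall n, 0 <= pn n) -> cvg (series pn @ \oo) -> mun @ \oo --> (0:R) ->
  0 < mu < 1 ->
  exists N, forall n, (N <= n)%N -> ((mun n + mu) * lam n / lam n.+1) ^+ 2 < mu.
Proof.
move=> lh0 hlh hstep hp hS hmu /andP[mu0 mu1].
set S := series pn.
have Sinc : {homo S : n m / (n <= m)%N >-> n <= m}.
  by apply/nondecreasing_seqP => n; rewrite /S seriesSr lerDl.
have SL := nondecreasing_cvgn_le Sinc hS.
pose t n := lam n.+1 - S n.+1.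
have tdec : {homo t : n m / (n <= m)%N >-> m <= n}.
  apply/nonincreasing_seqP => n; rewrite /t /S [series _ n.+2]seriesSr.
  have := hstep n.+1 isT; lra.
have tlb : has_lbound (range t).
  exists (lh - limn S) => _ [n _ <-]; rewrite /t.
  have := hlh n.+1 isT; have := SL n.+1; lra.
have tcv := nonincreasing_is_cvgn tdec tlb.
set l := limn t + limn S.
have hl : (fun n => lam n.+1) @ \oo --> l.
  have -> : (fun n => lam n.+1) = t \+ (fun n => S n.+1).
    by apply/funext => n; rewrite /t /= subrK.
  apply: cvgD; [exact: tcv | by rewrite (cvg_shiftS S)].
have hl0 : (fun n => lam n) @ \oo --> l by rewrite -(cvg_shiftS lam).
have lpos : lh <= l.
  rewrite -(cvg_lim _ hl) //; apply: limr_ge; first by apply/cvg_ex; exists l.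
  by near=> n; apply: hlh.
have lne : l != 0 by apply/negP => /eqP l0; move: lpos; rewrite l0; lra.
have hk : (fun n => (mun n + mu) * lam n / lam n.+1) @ \oo --> mu.
  have := cvgM (cvgM (cvgD hmu (cvg_cst mu)) hl0) (cvgV lne hl).
  rewrite add0r -mulrA divff // mulr1 => H; exact: H.
pose k n := (mun n + mu) * lam n / lam n.+1.
have hk2 : (fun n => k n * k n) @ \oo --> mu * mu by apply: cvgM.
have : mu * mu < mu by rewrite -subr_gt0 -{1}(mulr1 mu) -mulrBr mulr_gt0 // subr_gt0.
move/(cvgr_lt _ hk2) => [N _ HN]; exists N => n /HN /=; by rewrite expr2.
Unshelve. all: by end_near.
Qed.



Lemma keyx (R : realType) (t a b x : R) :
  2^-1 <= t -> t < 1 -> 0 <= b -> 2*b*t < 1 - t -> 0 <= a -> a*t < 1-t -> 0 < x ->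
  (1 - b) * x < a -> t * (1 + a) < 1 - b * x ->
  (1 - t - 2*b*t) + t*(1+b)*(1+x) - t*(1-b)*(1+x)^+2 <= 0 ->
  t * x * b * (1 + b) + t * t * a * (1 + a) - t * x * (1 + x) * (1 - b)^+2 < 0.
Proof.
move=> t0 t1 b0 hb a0 ha x0 h3 h4 h5.
have t0' : 0 < t by lra.
set c := t * a.
set cs := 1 - t - b * x.
have c0 : 0 <= c by rewrite /c mulr_ge0 // ltW.
have ccs : c < cs by rewrite /c /cs; lra.
have e1 : t * t * a * (1 + a) = c * (t + c) by rewrite /c; ring.
have i1 : c * (t + c) < cs * (t + cs) by nra.
have bt : b <= t by nra.
have i2 : x * t * (1 - b) < 1 - t.
  have : t * ((1 - b) * x) < t * a by rewrite ltr_pM2l.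
  lra.
have i3 : x * b <= 1.
  have b1 : b < 1 by lra.
  have j1 : b * (x * t * (1 - b)) <= b * (1 - t) by apply: ler_wpM2l => //; lra.
  have j2 : b * (1 - t) <= t * (1 - b) by nra.
  have j3 : (x * b) * (t * (1 - b)) <= 1 * (t * (1 - b)).
    rewrite mul1r; apply: le_trans j2; apply: le_trans j1; lra.
  have tb : 0 < t * (1 - b) by apply: mulr_gt0; lra.
  by move: j3; rewrite ler_pM2r.
have i4 : b * x * (-2 + t + x * (b + t - t * b)) <= 0.
  apply: mulr_ge0_le0; first by rewrite mulr_ge0 // ltW.
  nra.
rewrite e1.
have : t * x * b * (1 + b) + cs * (t + cs) - t * x * (1 + x) * (1 - b) ^+ 2 <= 0.
  rewrite /cs; nra.
lra.
Qed.

Lemma keyth (R : realType) (t a b th : R) :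
  2^-1 <= t -> t < 1 -> 0 <= b -> 2*b*t < 1 - t -> 0 <= a -> a*t < 1-t ->
  0 < th -> th < 1 ->
  1 - b < th * (1 + a - b) -> b < th * (1 + b - t * (1 + a)) ->
  (t^-1 - 1 - 2 * b) * th ^+ 2 + (1 + b) * th + b - 1 <= 0 ->
  th * (1 - th) * b * (1 + b) + th ^+ 2 * t * a * (1 + a) - (1 - th) * (1 - b) ^+ 2 < 0.
Proof.
move=> t0 t1 b0 hb a0 ha th0 th1 h3 h4 h5.
have tp : 0 < t by lra.
set x := (1 - th) / th.
have ex : x * th = 1 - th by rewrite /x mulrAC -mulrA divff ?mulr1 // gt_eqF.
have x0 : 0 < x by rewrite /x divr_gt0 // subr_gt0.
have k3 : (1 - b) * x < a by nra.
have k4 : t * (1 + a) < 1 - b * x by nra.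
have e1x : 1 + x = th^-1 by rewrite /x; field; rewrite gt_eqF.
have k5 : (1 - t - 2*b*t) + t*(1+b)*(1+x) - t*(1-b)*(1+x)^+2 <= 0.
  have -> : (1 - t - 2*b*t) + t*(1+b)*(1+x) - t*(1-b)*(1+x)^+2 =
     t / th ^+ 2 * ((t^-1 - 1 - 2 * b) * th ^+ 2 + (1 + b) * th + b - 1).
    by rewrite e1x; field; rewrite !gt_eqF.
  by apply: mulr_ge0_le0 => //; rewrite divr_ge0 // ?ltW // exprn_gt0.
have := @keyx R t a b x t0 t1 b0 hb a0 ha x0 k3 k4 k5.
have -> : t * x * b * (1 + b) + t * t * a * (1 + a) - t * x * (1 + x) * (1 - b)^+2
   = t / th ^+ 2 * (th * (1 - th) * b * (1 + b) + th ^+ 2 * t * a * (1 + a) - (1 - th) * (1 - b) ^+ 2).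
  by rewrite e1x /x; field; rewrite !gt_eqF.
rewrite pmulr_rlt0 //; last by rewrite divr_gt0 // exprn_gt0.
Qed.

Lemma param_facts (R : realType) (tau al0 be0 th0 ub : R) :
  2^-1 < tau -> tau < 1 -> 0 <= be0 -> be0 < 2^-1 * (tau^-1 - 1) ->
  0 <= al0 -> al0 < (1 - tau) / tau ->
  Num.max ((1 - be0) / (1 + al0 - be0)) (be0 / (1 + be0 - tau * (1 + al0))) < th0 ->
  ub = (- 1 - be0 + Num.sqrt ((1 + be0) ^+ 2
               - 4 * (tau^-1 - 1 - 2 * be0) * (be0 - 1)))
            / (2 * (tau^-1 - 1 - 2 * be0)) ->
  th0 <= ub ->
  exists rhoP rhoD, [/\ 0 < rhoP < 1, 0 <= rhoD < 1, 0 < th0, ub < 1 &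
   forall th al be, th0 <= th -> th <= ub -> 0 <= al -> al <= al0 -> 0 <= be -> be <= be0 ->
     (1 - th) * (1 + be) + th * tau * (1 + al) <= rhoP /\
     th * (1 - th) * be * (1 + be) + th ^+ 2 * tau * al * (1 + al) + (1 - th) * be * (1 - be)
       <= rhoD * ((1 - th) * (1 - be0))].
Proof.
move=> t0 t1 b0 hb a0 ha hmax hub hthub.
have tp : 0 < tau by lra.
have eti : tau^-1 * tau = 1 by rewrite mulVf // gt_eqF.
have hb' : 2 * be0 * tau < 1 - tau.
  have : 2 * be0 * tau < (tau^-1 - 1) * tau by rewrite ltr_pM2r //; lra.
  by rewrite mulrBl eti mul1r.
have ha' : al0 * tau < 1 - tau.
  have : al0 * tau < (1 - tau) / tau * tau by rewrite ltr_pM2r.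
  by rewrite -mulrA mulVf ?gt_eqF // mulr1.
move: hmax; rewrite gt_max => /andP[h3 h4].
have b1 : be0 < 2^-1 by nra.
have d3 : 0 < 1 + al0 - be0 by lra.
have d4 : 0 < 1 + be0 - tau * (1 + al0) by rewrite mulrDr mulr1 (mulrC tau); lra.
move: h3; rewrite ltr_pdivrMr // => h3.
move: h4; rewrite ltr_pdivrMr // => h4.
set k := tau^-1 - 1 - 2 * be0.
have kp : 0 < k by rewrite /k; lra.
set Dl := (1 + be0) ^+ 2 - 4 * k * (be0 - 1).
have Dl0 : 0 <= Dl by rewrite /Dl; nra.
have sq2 := sqr_sqrtr Dl0.
have sq0 := sqrtr_ge0 Dl.
move: hub; rewrite -/k -/Dl => hub.
set sq := Num.sqrt Dl in sq2 sq0 hub.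
have e2 : 2 * k * ub = - 1 - be0 + sq.
  by rewrite hub; field; rewrite gt_eqF.
have qub : k * ub ^+ 2 + (1 + be0) * ub + be0 - 1 = 0.
  have : 4 * k * (k * ub ^+ 2 + (1 + be0) * ub + be0 - 1) = 0.
    have -> : 4 * k * (k * ub ^+ 2 + (1 + be0) * ub + be0 - 1) =
      (2 * k * ub + 1 + be0) ^+ 2 - Dl by rewrite /Dl; ring.
    by rewrite e2 -sq2; ring.
  move/eqP; rewrite mulf_eq0 => /orP[|/eqP //].
  by rewrite mulf_eq0 gt_eqF //= gt_eqF.
have th0p : 0 < th0 by nra.
have ubp : 0 < ub by lra.
have ub1 : ub < 1.
  rewrite ltNge; apply/negP => hu; move: qub; nra.
have h3u : 1 - be0 < ub * (1 + al0 - be0) by nra.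
have h4u : be0 < ub * (1 + be0 - tau * (1 + al0)) by nra.
have h5u : k * ub ^+ 2 + (1 + be0) * ub + be0 - 1 <= 0 by rewrite qub.
have Fub := @keyth R tau al0 be0 ub (ltW t0) t1 b0 hb' a0 ha' ubp ub1 h3u h4u h5u.
set Gub := ub * (1 - ub) * be0 * (1 + be0) + ub ^+ 2 * tau * al0 * (1 + al0)
   + (1 - ub) * be0 * (1 - be0).
have dd : 0 < (1 - ub) * (1 - be0) by apply: mulr_gt0; lra.
have Gub0 : 0 <= Gub.
  rewrite /Gub; apply: addr_ge0; [apply: addr_ge0|]; apply: mulr_ge0; try apply: mulr_ge0;
    try apply: mulr_ge0; try apply: mulr_ge0; try lra; rewrite exprn_ge0 // ltW.
exists ((1 - th0) * (1 + be0) + th0 * tau * (1 + al0)), (Gub / ((1 - ub) * (1 - be0))).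
split => //.
- apply/andP; split; last by nra.
  have : 0 <= (1 - th0) * (1 + be0) by apply: mulr_ge0; lra.
  have : 0 < th0 * tau * (1 + al0) by apply: mulr_gt0; [apply: mulr_gt0|]; lra.
  lra.
- apply/andP; split; first by apply: divr_ge0 => //; apply: ltW.
  rewrite ltr_pdivrMr // mul1r /Gub; lra.
move=> th al be th0th thub al0' alal0 be0' bebe0.
have th0' : 0 < th by lra.
have th1' : th < 1 by lra.
split.
  have : (1 - th) * (1 + be) <= (1 - th) * (1 + be0) by apply: ler_wpM2l; lra.
  have : th * tau * (1 + al) <= th * tau * (1 + al0).
    by apply: ler_wpM2l; [apply: mulr_ge0; lra | lra].
  have : (th - th0) * (tau * (1 + al0) - (1 + be0)) <= 0.
    by apply: mulr_ge0_le0; lra.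
  lra.
set Gth := th * (1 - th) * be0 * (1 + be0) + th ^+ 2 * tau * al0 * (1 + al0)
   + (1 - th) * be0 * (1 - be0).
have i1 : th * (1 - th) * be * (1 + be) + th ^+ 2 * tau * al * (1 + al) + (1 - th) * be * (1 - be) <= Gth.
  have j1 : th * (1 - th) * be * (1 + be) <= th * (1 - th) * be0 * (1 + be0).
    rewrite -!(mulrA (th * (1 - th))); apply: ler_wpM2l; first by apply: mulr_ge0; lra.
    by apply: ler_pM => //; lra.
  have j2 : th ^+ 2 * tau * al * (1 + al) <= th ^+ 2 * tau * al0 * (1 + al0).
    rewrite -!(mulrA (th ^+ 2 * tau)); apply: ler_wpM2l; first by apply: mulr_ge0; [apply: exprn_ge0|]; lra.
    by apply: ler_pM => //; lra.
  have j3 : (1 - th) * be * (1 - be) <= (1 - th) * be0 * (1 - be0).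
    rewrite -!(mulrA (1 - th)); apply: ler_wpM2l; first by lra.
    nra.
  rewrite /Gth; lra.
have i2 : Gth * (1 - ub) <= Gub * (1 - th).
  have j1 : th ^+ 2 * (1 - ub) <= ub ^+ 2 * (1 - th).
    have tu : th ^+ 2 <= ub ^+ 2 by rewrite !expr2; nra.
    apply: ler_pM; [apply: exprn_ge0; lra | lra | exact: tu | lra].
  have j2 : 0 <= tau * al0 * (1 + al0) by apply: mulr_ge0; [apply: mulr_ge0|]; lra.
  have j3 : (1 - th) * (1 - ub) * (th - ub) * (be0 * (1 + be0)) <= 0.
    apply: mulr_le0_ge0; last by apply: mulr_ge0; lra.
    apply: mulr_ge0_le0; [apply: mulr_ge0|]; lra.
  have : tau * al0 * (1 + al0) * (th ^+ 2 * (1 - ub)) <= tau * al0 * (1 + al0) * (ub ^+ 2 * (1 - th)).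
    exact: ler_wpM2l.
  have -> : Gth * (1 - ub) = Gub * (1 - th) + (1 - th) * (1 - ub) * (th - ub) * (be0 * (1 + be0))
     + (tau * al0 * (1 + al0) * (th ^+ 2 * (1 - ub)) - tau * al0 * (1 + al0) * (ub ^+ 2 * (1 - th))).
    by rewrite /Gth /Gub; ring.
  lra.
apply: (le_trans i1).
have -> : Gub / ((1 - ub) * (1 - be0)) * ((1 - th) * (1 - be0)) = Gub * (1 - th) / (1 - ub).
  by field; apply/andP; split; rewrite gt_eqF //; lra.
by rewrite ler_pdivlMr //; lra.
Qed.




Lemma geom_seq (R : realType) (G : nat -> R) (rho : R) (N : nat) :
  0 <= rho -> (forall n, (N <= n)%N -> G n.+1 <= rho * G n) ->
  forall k, G (k + N)%N <= rho ^+ k * G N.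
Proof.
move=> r0 h; elim => [|k IH]; first by rewrite add0n expr0 mul1r.
rewrite addSn; apply: (le_trans (h _ (leq_addl _ _))).
by rewrite exprS -mulrA; apply: ler_wpM2l.
Qed.

Lemma final_bound (R : realType) (a G : nat -> R) (rho : R) (N : nat) :
  0 < rho -> (forall n, 0 <= a n) -> (forall n, (N <= n)%N -> a n <= G n) ->
  (forall k, G (k + N)%N <= rho ^+ k * G N) -> 0 <= G N ->
  exists K, 0 <= K /\ forall n, a n <= K * rho ^+ n.
Proof.
move=> r0 a0 aG hG G0.
have rn n : 0 < rho ^+ n by apply: exprn_gt0.
exists (\sum_(i < N) a i / rho ^+ i + G N / rho ^+ N).
have s0 : 0 <= \sum_(i < N) a i / rho ^+ i.
  by apply: sumr_ge0 => i _; apply: divr_ge0 => //; apply: ltW.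
have g0 : 0 <= G N / rho ^+ N by apply: divr_ge0 => //; apply: ltW.
split; first exact: addr_ge0.
move=> n; case: (ltnP n N) => hn.
- have : a n / rho ^+ n <= \sum_(i < N) a i / rho ^+ i.
    rewrite (bigD1 (Ordinal hn)) //= lerDl.
    by apply: sumr_ge0 => i _; apply: divr_ge0 => //; apply: ltW.
  rewrite ler_pdivrMr // => h.
  apply: (le_trans h); apply: ler_wpM2r; first exact: ltW.
  by rewrite lerDl.
- apply: (le_trans (aG _ hn)).
  have := hG (n - N)%N; rewrite subnK // => h; apply: (le_trans h).
  have -> : rho ^+ n = rho ^+ (n - N) * rho ^+ N by rewrite -exprD subnK.
  have : G N <= (\sum_(i < N) a i / rho ^+ i + G N / rho ^+ N) * rho ^+ N.
    rewrite mulrDl divfK ?gt_eqF //; rewrite lerDr.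
    by apply: mulr_ge0 => //; apply: ltW.
  move=> h2; rewrite mulrCA; apply: ler_wpM2l; [exact: ltW | exact: h2].
Qed.

Lemma sq_le (R : realType) (a b : R) : 0 <= a -> a <= b -> a ^+ 2 <= b ^+ 2.
Proof. by move=> a0 ab; rewrite !expr2; apply: ler_pM. Qed.


Theorem theorem4p2 (R : realType) (H : completeNormedModType R)
  (ip : H -> H -> R) (A : H -> H) (B : H -> set H) (L r : R)
  (mu : R) (alpha beta theta : nat -> R) (mun pn : nat -> R)
  (alpha0 beta0 theta0 : R)
  (x w z y : nat -> H) (lam : nat -> R) :
  is_inner_product ip ->
  (* Assumption 4.1 (i) *)
  zeros_sum A B !=set0 ->
  (* Assumption 4.1 (ii) *)
  0 < L -> 0 < r ->
  ((lipschitz_op A L /\ strongly_monotone_op ip A r /\ maximal_monotone_mop ip B)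
   \/ (lipschitz_op A L /\ monotone_op ip A /\ maximal_monotone_mop ip B
       /\ strongly_monotone_mop ip B r)) ->
  (* parameters of Algorithm 3.1 *)
  0 < mu < 1 -> 0 < lam 1%N ->
  (forall n, 0 <= mun n) -> (forall n, 0 <= pn n) ->
  (* Assumption 4.1 (iii) *)
  let lamhat := Num.min (mu / L) (lam 1%N) in
  let tau := 1 - 2^-1 * Num.min (1 - mu) (2 * lamhat * r) in
  let ub := (- 1 - beta0 + Num.sqrt ((1 + beta0) ^+ 2
               - 4 * (tau^-1 - 1 - 2 * beta0) * (beta0 - 1)))
            / (2 * (tau^-1 - 1 - 2 * beta0)) in
  (forall n, (1 <= n)%N -> 0 <= beta n <= beta0) ->
  beta0 < 2^-1 * (tau^-1 - 1) ->
  (forall n, (1 <= n)%N -> 0 <= alpha n <= alpha0) ->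
  alpha0 < (1 - tau) / tau ->
  Num.max ((1 - beta0) / (1 + alpha0 - beta0))
          (beta0 / (1 + beta0 - tau * (1 + alpha0))) < theta0 ->
  (forall n, (1 <= n)%N -> theta0 <= theta n <= ub) ->
  (forall n, (1 <= n)%N -> theta n <= theta n.+1) ->
  (* Algorithm 3.1 *)
  (forall n, (1 <= n)%N -> w n = x n + alpha n *: (x n - x n.-1)) ->
  (forall n, (1 <= n)%N -> z n = x n + beta n *: (x n - x n.-1)) ->
  (forall n, (1 <= n)%N -> in_resolvent B (lam n) (w n - lam n *: A (w n)) (y n)) ->
  (forall n, (1 <= n)%N -> lam n.+1 =
     if A (w n) != A (y n)
     then Num.min ((mun n + mu) * `|w n - y n| / `|A (w n) - A (y n)|)
                  (lam n + pn n)
     else lam n + pn n) ->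
  (* the algorithm does not stop *)
  (forall n, (1 <= n)%N -> w n != y n) ->
  (forall n, (1 <= n)%N -> x n.+1 =
     (1 - theta n) *: z n + theta n *: (y n - lam n *: (A (y n) - A (w n)))) ->
  (* additional hypotheses of Theorem 4.2 *)
  cvg (series pn @ \oo) ->
  mun @ \oo --> (0 : R) ->
  exists p q K, [/\ zeros_sum A B p, 0 < q < 1, 0 <= K &
     forall n, `|x n - p| ^+ 2 <= K * q ^+ n].
Proof.
move=> hip [p [bp [hBp hAp]]] L0 r0 hAB /andP[mu0 mu1] hlam1 hmun hpn lamhat tau ub
  hbeta hb0 halpha ha0 hmax htheta hthinc hw hz hres hlamS hne hx hS hmun0.
have hLip : lipschitz_op A L by case: hAB => [[]|[]].
have hcomb : forall yy bb, B yy bb ->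
    r * ip (yy - p) (yy - p) <= ip (bb - bp) (yy - p) + ip (A yy - A p) (yy - p).
  move=> yy bb hbb; rewrite (ipsq ip hip).
  case: hAB => [[_ [hA [hB _]]] | [_ [hA [[hB _] hBs]]]].
  - have := hB _ _ _ _ hbb hBp; have := hA yy p; lra.
  - have := hBs _ _ _ _ hbb hBp; have := hA yy p; lra.
have be0 : 0 <= beta0 by case/andP: (hbeta 1%N isT) => h1 h2; apply: le_trans h2.
have al0 : 0 <= alpha0 by case/andP: (halpha 1%N isT) => h1 h2; apply: le_trans h2.
have th0ub : theta0 <= ub by case/andP: (htheta 1%N isT) => h1 h2; apply: le_trans h2.
have muL : 0 < mu / L by apply: divr_gt0.
have lh0 : 0 < lamhat by rewrite /lamhat lt_min muL hlam1.
have hratio : forall n, (1 <= n)%N ->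
    lam n.+1 * `|A (w n) - A (y n)| <= (mun n + mu) * `|w n - y n|.
  move=> n hn; rewrite hlamS //; case: ifP => hneq.
  - have hG : 0 < `|A (w n) - A (y n)| by rewrite normr_gt0 subr_eq0.
    set M := (mun n + mu) * `|w n - y n| / `|A (w n) - A (y n)|.
    have hM : Num.min M (lam n + pn n) <= M by rewrite ge_min lexx.
    apply: (le_trans (ler_wpM2r (ltW hG) hM)).
    by rewrite /M divfK ?gt_eqF.
  - move/negbT: hneq; rewrite negbK => /eqP ->; rewrite subrr normr0 mulr0.
    apply: mulr_ge0; [apply: addr_ge0 => //; exact: ltW | exact: normr_ge0].
have hlb : forall n, (1 <= n)%N -> lamhat <= lam n.
  move=> k; elim: k => [//|j IH] hj.
  case: j IH hj => [_ _|n IH _]; first by rewrite /lamhat ge_min lexx orbT.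
  have IH' := IH isT.
  rewrite hlamS //; case: ifP => hneq.
  - rewrite le_min; apply/andP; split; last by have := hpn n.+1; lra.
    have hG : 0 < `|A (w n.+1) - A (y n.+1)| by rewrite normr_gt0 subr_eq0.
    apply: (@le_trans _ _ (mu / L)); first by rewrite /lamhat ge_min lexx.
    rewrite ler_pdivlMr //.
    have hl := hLip (w n.+1) (y n.+1).
    have : mu / L * `|A (w n.+1) - A (y n.+1)| <= mu / L * (L * `|w n.+1 - y n.+1|).
      by apply: ler_wpM2l => //; apply: ltW.
    rewrite mulrA divfK ?gt_eqF // => h1; apply: (le_trans h1).
    apply: ler_wpM2r; first exact: normr_ge0.
    by have := hmun n.+1; lra.
  - by have := hpn n.+1; lra.
have hstep : forall n, (1 <= n)%N -> lam n.+1 <= lam n + pn n.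
  by move=> n hn; rewrite hlamS //; case: ifP => _ //; rewrite ge_min lexx orbT.
have [N1 hN1] := @lam_eventually R lam mun pn mu lamhat lh0 hlb hstep hpn hS hmun0 (introT andP (conj mu0 mu1)).
set m := Num.min (1 - mu) (2 * lamhat * r).
have etau : tau = 1 - 2^-1 * m by [].
have m1 : m <= 1 - mu by rewrite /m ge_min lexx.
have m2 : m <= 2 * lamhat * r by rewrite /m ge_min lexx orbT.
have m0 : 0 < m.
  rewrite /m lt_min; apply/andP; split; first lra.
  by apply: mulr_gt0 => //; apply: mulr_gt0.
have tau1 : 2^-1 < tau by rewrite etau; lra.
have tau2 : tau < 1 by rewrite etau; lra.
have tau0 : 0 <= tau by rewrite etau; lra.
pose u n := y n - lam n *: (A (y n) - A (w n)).
have htseng : forall n, (1 <= n)%N -> (N1 <= n)%N ->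
    ip (u n - p) (u n - p) <= tau * ip (w n - p) (w n - p).
  move=> n hn hN.
  case: (hres n hn) => bb [hbb hwb].
  have lamn : 0 < lam n by apply: lt_le_trans (hlb n hn).
  have lamn1 : 0 < lam n.+1 by apply: lt_le_trans (hlb n.+1 isT).
  have hm := @mono_comb _ _ ip hip _ _ _ _ _ _ _ _ _ _ (ltW lamn) hwb hAp (hcomb _ _ hbb).
  set kap := (mun n + mu) * lam n / lam n.+1.
  have hk : lam n ^+ 2 * ip (A (w n) - A (y n)) (A (w n) - A (y n))
      <= kap ^+ 2 * ip (w n - y n) (w n - y n).
    have h1 : lam n * `|A (w n) - A (y n)| <= kap * `|w n - y n|.
      have e1 : lam n * `|A (w n) - A (y n)| =
         lam n / lam n.+1 * (lam n.+1 * `|A (w n) - A (y n)|).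
        by rewrite mulrA divfK ?gt_eqF.
      have e2 : kap * `|w n - y n| = lam n / lam n.+1 * ((mun n + mu) * `|w n - y n|).
        by rewrite /kap; field; rewrite gt_eqF.
      rewrite e1 e2; apply: ler_wpM2l; last exact: hratio.
      by apply: divr_ge0; apply: ltW.
    rewrite !(ipsq ip hip) -!exprMn; apply: sq_le => //.
    by apply: mulr_ge0; [exact: ltW | exact: normr_ge0].
  have ht := @tseng_ineq _ _ ip hip _ _ _ _ _ _ _ hm hk.
  have hk2 : kap ^+ 2 < mu by exact: hN1.
  have hW := ip_sum_le ip hip (w n - y n) (y n - p).
  rewrite addrA subrK in hW.
  have DD0 := ip_ge0 ip hip (w n - y n).
  have EE0 := ip_ge0 ip hip (y n - p).
  have c1 : m * ip (w n - y n) (w n - y n) <= (1 - kap ^+ 2) * ip (w n - y n) (w n - y n).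
    by apply: ler_wpM2r => //; lra.
  have c2 : m * ip (y n - p) (y n - p) <= 2 * lam n * r * ip (y n - p) (y n - p).
    apply: ler_wpM2r => //; apply: (le_trans m2).
    by rewrite -!mulrA ler_pM2l // ler_pM2r // hlb.
  have c3 : m * ip (w n - p) (w n - p) <=
      m * (2 * ip (w n - y n) (w n - y n) + 2 * ip (y n - p) (y n - p)).
    by apply: ler_wpM2l => //; exact: ltW.
  rewrite etau /u; lra.
have [rhoP [rhoD [/andP[rP0 rP1] /andP[rD0 rD1] th0p ub1 hpar]]] :=
  @param_facts R tau alpha0 beta0 theta0 ub tau1 tau2 be0 hb0 al0 ha0 hmax erefl th0ub.
set N2 := maxn N1 2.
pose a n := ip (x n - p) (x n - p).
pose d n := ip (x n - x n.-1) (x n - x n.-1).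
pose Ef n := (1 - theta n) * (1 - beta n) / theta n.
have hinert : forall n, (N2 <= n)%N ->
    a n.+1 + Ef n * d n.+1 <=
    ((1 - theta n) * (1 + beta n) + theta n * tau * (1 + alpha n)) * a n +
    ((1 - theta n) * beta n * (1 + beta n) + theta n * tau * alpha n * (1 + alpha n)
      + (1 - theta n) * beta n * (1 - beta n) / theta n) * d n.
  move=> n hn.
  have hn1 : (1 <= n)%N by apply: leq_trans hn; rewrite leq_max orbT.
  have hnN : (N1 <= n)%N by apply: leq_trans hn; rewrite leq_max leqnn.
  case/andP: (htheta n hn1) => tl tu.
  case/andP: (hbeta n hn1) => bl bu.
  case/andP: (halpha n hn1) => al au.
  have hZ : x n.+1 - p = (1 - theta n) *: ((1 + beta n) *: (x n - p) - beta n *: (x n.-1 - p))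
      + theta n *: (u n - p).
    by rewrite hx // hz // (vec_idZ ip hip).
  have hU : ip (u n - p) (u n - p) <= tau *
      ip ((1 + alpha n) *: (x n - p) - alpha n *: (x n.-1 - p))
         ((1 + alpha n) *: (x n - p) - alpha n *: (x n.-1 - p)).
    by rewrite -(vec_idW ip hip) -hw //; exact: htseng.
  have := @inertial_core _ _ ip hip _ _ _ _ _ _ _ _ (lt_le_trans th0p tl)
     (le_lt_trans tu ub1) bl al tau0 hU hZ.
  by rewrite !sub_sub.
have be01 : beta0 < 1.
  have ti : tau^-1 * tau = 1 by rewrite mulVf // gt_eqF //; lra.
  have : beta0 * tau < 2^-1 * (tau^-1 - 1) * tau by rewrite ltr_pM2r //; lra.
  nra.
pose rho := Num.max rhoP rhoD.
have rho0 : 0 < rho by rewrite /rho lt_max rP0.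
have rho1 : rho < 1 by rewrite /rho gt_max rP1 rD1.
have rPr : rhoP <= rho by rewrite /rho le_max lexx.
have rDr : rhoD <= rho by rewrite /rho le_max lexx orbT.
have a0 : forall n, 0 <= a n by move=> n; exact: ip_ge0.
have d0 : forall n, 0 <= d n by move=> n; exact: ip_ge0.
have Ef0 : forall n, (1 <= n)%N -> 0 <= Ef n.
  move=> n hn; case/andP: (htheta n hn) => tl tu; case/andP: (hbeta n hn) => bl bu.
  apply: divr_ge0; last by lra.
  by apply: mulr_ge0; lra.
pose G n := a n + Ef n.-1 * d n.
have aG : forall n, (2 <= n)%N -> a n <= G n.
  move=> n hn; rewrite /G lerDl; apply: mulr_ge0 => //; apply: Ef0.
  by rewrite -ltnS prednK //; apply: leq_trans hn.
have hstepG : forall n, (N2 <= n)%N -> G n.+1 <= rho * G n.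
  move=> n hn.
  have hn2 : (2 <= n)%N by apply: leq_trans hn; rewrite leq_max leqnn orbT.
  have hn1 : (1 <= n)%N by apply: leq_trans hn2.
  have hp1 : (1 <= n.-1)%N by rewrite -ltnS prednK.
  case/andP: (htheta n hn1) => tl tu.
  case/andP: (hbeta n hn1) => bl bu.
  case/andP: (halpha n hn1) => al au.
  case/andP: (htheta n.-1 hp1) => tl' tu'.
  case/andP: (hbeta n.-1 hp1) => bl' bu'.
  have tt : theta n.-1 <= theta n by have := hthinc n.-1 hp1; rewrite prednK.
  have thp : 0 < theta n by lra.
  have thp' : 0 < theta n.-1 by lra.
  have [hP hD] := hpar _ _ _ tl tu al au bl bu.
  have hI := hinert n hn.
  rewrite /G /=.
  set th := theta n in hI hP hD tl tu tt thp *.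
  set be := beta n in hI hP hD bl bu *.
  set al' := alpha n in hI hP hD al au *.
  have hDn : (1 - th) * be * (1 + be) + th * tau * al' * (1 + al') + (1 - th) * be * (1 - be) / th
      <= rhoD * ((1 - th) * (1 - beta0) / th).
    have -> : (1 - th) * be * (1 + be) + th * tau * al' * (1 + al') + (1 - th) * be * (1 - be) / th
      = (th * (1 - th) * be * (1 + be) + th ^+ 2 * tau * al' * (1 + al') + (1 - th) * be * (1 - be)) / th.
      by field; rewrite gt_eqF.
    by rewrite mulrA ler_pM2r ?invr_gt0.
  have hE : (1 - th) * (1 - beta0) / th <= Ef n.-1.
    rewrite /Ef.
    have e1 : (1 - th) * (1 - beta0) / th = (th^-1 - 1) * (1 - beta0) by field; rewrite gt_eqF.
    have e2 : (1 - theta n.-1) * (1 - beta n.-1) / theta n.-1 = ((theta n.-1)^-1 - 1) * (1 - beta n.-1).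
      by field; rewrite gt_eqF.
    rewrite e1 e2; apply: ler_pM.
    - rewrite subr_ge0 invf_ge1 //; lra.
    - lra.
    - by rewrite lerB // lef_pV2 // posrE.
    - lra.
  have c1 : ((1 - th) * (1 + be) + th * tau * (1 + al')) * a n <= rho * a n.
    by apply: ler_wpM2r => //; apply: le_trans rPr.
  have c2 : ((1 - th) * be * (1 + be) + th * tau * al' * (1 + al') + (1 - th) * be * (1 - be) / th) * d n
      <= rho * (Ef n.-1 * d n).
    rewrite mulrA; apply: ler_wpM2r => //.
    apply: (le_trans hDn); apply: ler_pM; [exact: rD0 | | exact: rDr | exact: hE].
    by apply: divr_ge0; [apply: mulr_ge0; lra | lra].
  rewrite mulrDr; lra.
have hG := @geom_seq R G rho N2 (ltW rho0) hstepG.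
have G0 : 0 <= G N2.
  apply: le_trans (aG _ _); first exact: a0.
  by rewrite leq_max leqnn orbT.
have aG' : forall n, (N2 <= n)%N -> a n <= G n.
  by move=> n hn; apply: aG; apply: leq_trans hn; rewrite leq_max leqnn orbT.
have [K [K0 hK]] := @final_bound R a G rho N2 rho0 a0 aG' hG G0.
exists p, rho, K; split => //.
- by exists bp.
- by rewrite rho0 rho1.
- by move=> n; rewrite -(ipsq ip hip); exact: hK.
Qed.
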